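(* Let $G=(V,E)$ be a connected simple graph with $|V|\ge2$. Then $$\varepsilon(G)\le\frac12\sum_{v\in V}\varepsilon(G\setminus v),$$ where $G\setminus v$ is the subgraph induced on $V\setminus\{v\}$.
   Context: For an undirected simple graph $G=(V,E)$, $\varepsilon(G)$ denotes the maximum, over all acyclic orientations of $E$, of the number of linear extensions of the partial order induced on $V$ (where $u<v$ iff there is a directed path from $u$ to $v$; a linear extension of a poset on an $n$-element set is an order-preserving bijection onto $[n]$). *)

(* Defs.v *)
From mathcomp Require Import all_boot.
Set Implicit Arguments. Unset Strict Implicit. Unset Printing Implicit Defensive.

Section Graphs.
Variable T : finType.

Definition simple_graph (e : rel T) : Prop := symmetric e /\ irreflexive e.

Definition connected_graph (e : rel T) : Prop := forall u v : T, connect e u v.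

Definition arcrel (A : {set T * T}) : rel T := fun u v => (u, v) \in A.

Definition is_orientation (e : rel T) (S : {set T}) (A : {set T * T}) : bool :=
  [forall u, forall v,
     (((u, v) \in A) ==> [&& e u v, u \in S & v \in S]) &&
     ([&& e u v, u \in S & v \in S] ==> (((u, v) \in A) (+) ((v, u) \in A)))].

Definition is_acyclic (A : {set T * T}) : bool :=
  [forall u, forall v, ((u, v) \in A) ==> ~~ connect (arcrel A) v u].

Definition acyclic_orientation e S A := is_orientation e S A && is_acyclic A.

Definition ao_lt (A : {set T * T}) (u v : T) : bool :=
  (u != v) && connect (arcrel A) u v.

(* Linear extensions of the poset (S, ao_lt A): order-preserving bijections
   S -> {1,...,#|S|}, encoded as functions T -> nat-bounded ordinals that are 0
   outside S. *)
Definition is_linext (S : {set T}) (A : {set T * T}) (f : {ffun T -> 'I_#|T|.+1}) : bool :=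
  [&& [forall x, (x \notin S) ==> (nat_of_ord (f x) == 0)],
      [forall x in S, (1 <= f x) && (f x <= #|S|)],
      [forall x in S, forall y in S, (f x == f y) ==> (x == y)] &
      [forall u in S, forall v in S, ao_lt A u v ==> (f u < f v)]].

Definition num_linext (S : {set T}) (A : {set T * T}) : nat :=
  #|[set f | is_linext S A f]|.

Definition eps (e : rel T) (S : {set T}) : nat :=
  \max_(A : {set T * T} | acyclic_orientation e S A) num_linext S A.

End Graphs.

(* Main.v *)
Require Import Defs.
From mathcomp Require Import all_boot.
From mathcomp Require Import zify.

Set Implicit Arguments. Unset Strict Implicit. Unset Printing Implicit Defensive.
Ltac nlia := rewrite -?subn1; repeat match goal with |- context [nat_of_ord ?t] => let n := fresh "n" in move: (nat_of_ord t) => n end; lia.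

Section Aux.
Variable T : finType.
Implicit Types (S : {set T}) (A : {set T * T}) (f : {ffun T -> 'I_#|T|.+1}).

Lemma linextE S A f : is_linext S A f ->
  [/\ forall x, x \notin S -> f x = 0 :> nat,
      forall x, x \in S -> 1 <= f x <= #|S|,
      forall x y, x \in S -> y \in S -> f x = f y :> nat -> x = y &
      forall u v, u \in S -> v \in S -> ao_lt A u v -> f u < f v].
Proof.
move/and4P=> [/forallP H1 /forall_inP H2 /forall_inP H3 /forall_inP H4]; split.
- by move=> x Hx; apply/eqP; move/implyP: (H1 x); apply.
- by move=> x Hx; exact: H2.
- move=> x y Hx Hy Hf; move/forall_inP: (H3 x Hx) => /(_ y Hy) /implyP.
  by move=> /(_ (introT eqP Hf)) /eqP.
- move=> u v Hu Hv Hl; move/forall_inP: (H4 u Hu) => /(_ v Hv) /implyP.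
  by apply.
Qed.

Lemma linextI S A f :
  (forall x, x \notin S -> f x = 0 :> nat) ->
  (forall x, x \in S -> 1 <= f x <= #|S|) ->
  (forall x y, x \in S -> y \in S -> f x = f y :> nat -> x = y) ->
  (forall u v, u \in S -> v \in S -> ao_lt A u v -> f u < f v) ->
  is_linext S A f.
Proof.
move=> H1 H2 H3 H4; apply/and4P; split.
- by apply/forallP=> x; apply/implyP=> Hx; rewrite H1.
- by apply/forall_inP.
- apply/forall_inP=> x Hx; apply/forall_inP=> y Hy; apply/implyP=> /eqP Hf.
  by apply/eqP; apply: H3 => //; rewrite Hf.
- apply/forallP=> u; apply/implyP=> Hu; apply/forallP=> v; apply/implyP=> Hv; apply/implyP; exact: H4.
Qed.

Definition restr A (v : T) : {set T * T} :=
  [set p in A | (p.1 != v) && (p.2 != v)].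

Lemma restr_sub A v : subrel (arcrel (restr A v)) (arcrel A).
Proof. by move=> x y; rewrite /arcrel inE => /andP[]. Qed.

Lemma restr_connect A v x y :
  connect (arcrel (restr A v)) x y -> connect (arcrel A) x y.
Proof.
apply: connect_sub => a b Hab; apply: connect1; exact: restr_sub Hab.
Qed.

Lemma restr_lt A v x y : ao_lt (restr A v) x y -> ao_lt A x y.
Proof. by move=> /andP[Hn H]; rewrite /ao_lt Hn (restr_connect H). Qed.

Lemma restr_ao e A v : acyclic_orientation e [set: T] A ->
  acyclic_orientation e ([set: T] :\ v) (restr A v).
Proof.
move=> /andP[/forallP HO /forallP HA]; apply/andP; split.
- apply/forallP=> u; apply/forallP=> w.
  move/forallP: (HO u) => /(_ w).
  rewrite !inE /=.
  by case: ((u, w) \in A); case: ((w, u) \in A); case: (u == v);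
     case: (w == v); case: (e u w).
- apply/forallP=> u; apply/forallP=> w; apply/implyP.
  rewrite inE => /andP[Huw _].
  move/forallP: (HA u) => /(_ w) /implyP /(_ Huw).
  apply: contra; exact: restr_connect.
Qed.


Lemma linext_surj A f : is_linext [set: T] A f ->
  forall k : 'I_#|T|.+1, k != ord0 -> exists x, f x = k.
Proof.
case/linextE=> _ H2 H3 _ k Hk.
have Hsub : [set f x | x in [set: T]] \subset [set~ ord0].
  apply/subsetP=> y /imsetP[x _ ->]; rewrite !inE.
  apply/eqP=> Hx; have := H2 x (in_setT x); rewrite Hx; done.
have Hcard : #|[set f x | x in [set: T]]| = #|T|.
  rewrite card_in_imset ?cardsT //.
  by move=> x y Hx Hy Hxy; apply: H3 => //; rewrite Hxy.
have : [set f x | x in [set: T]] == [set~ ord0].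
  by rewrite eqEcard Hsub cardsC1 card_ord Hcard /=.
move/eqP=> Heq.
have : k \in [set f x | x in [set: T]] by rewrite Heq !inE.
by case/imsetP=> x _ ->; exists x.
Qed.

Definition shift1 (v : T) f : {ffun T -> 'I_#|T|.+1} :=
  [ffun x => inord (if x == v then 0 else (f x).-1)].
Definition shift0 (v : T) f : {ffun T -> 'I_#|T|.+1} :=
  [ffun x => if x == v then ord0 else f x].

Lemma shift1E v f x : (shift1 v f x : nat) = if x == v then 0 else (f x).-1.
Proof.
rewrite ffunE inordK //; case: ifP => // _.
have := ltn_ord (f x); lia.
Qed.

Lemma shift0E v f x : (shift0 v f x : nat) = if x == v then 0 else f x.
Proof. by rewrite ffunE; case: ifP. Qed.

Lemma card_setD1T (v : T) : #|[set: T] :\ v| = #|T|.-1.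
Proof. by have := cardsD1 v [set: T]; rewrite cardsT in_setT; lia. Qed.

Lemma L1 A v :
  #|[set f | is_linext [set: T] A f & (f v : nat) == 1]|
  <= num_linext ([set: T] :\ v) (restr A v).
Proof.
rewrite /num_linext -(card_in_imset (f := shift1 v)).
  apply: subset_leq_card; apply/subsetP=> g /imsetP[f Hf ->].
  move: Hf; rewrite !inE => /andP[Hf /eqP Hfv].
  case/linextE: (Hf) => _ H2 H3 H4.
  have Hneq x : x != v -> (f x : nat) != 1.
    move=> Hx; apply/eqP=> Hx1; move/eqP: Hx; apply.
    by apply: H3 => //; rewrite Hx1 Hfv.
  apply: linextI.
  - by move=> x; rewrite !inE andbT shift1E negbK => ->.
  - move=> x; rewrite !inE andbT shift1E card_setD1T => Hx; rewrite (negbTE Hx).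
    have := H2 x (in_setT x); have := Hneq x Hx; rewrite cardsT; rewrite -!subn1; nlia.
  - move=> x y; rewrite !inE !andbT !shift1E => Hx Hy; rewrite (negbTE Hx) (negbTE Hy).
    have := H2 x (in_setT x); have := H2 y (in_setT y) => Hy1 Hx1 Hxy.
    by apply: H3 => //; lia.
  - move=> u w; rewrite !inE !andbT !shift1E => Hu Hw; rewrite (negbTE Hu) (negbTE Hw).
    move/restr_lt/(H4 u w (in_setT u) (in_setT w)).
    have := H2 u (in_setT u); rewrite -!subn1; lia.
move=> f g; rewrite !inE => /andP[Hf /eqP Hfv] /andP[Hg /eqP Hgv] Heq.
case/linextE: Hf => _ Hf2 _ _; case/linextE: Hg => _ Hg2 _ _.
apply/ffunP=> x; apply/val_inj => /=.
have := congr1 (fun h : {ffun T -> 'I_#|T|.+1} => (h x : nat)) Heq.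
rewrite /= !shift1E; case: eqP => [->|_]; first by rewrite Hfv Hgv.
have := Hf2 x (in_setT x); have := Hg2 x (in_setT x); nlia.
Qed.

Lemma Ln A v :
  #|[set f | is_linext [set: T] A f & (f v : nat) == #|T|]|
  <= num_linext ([set: T] :\ v) (restr A v).
Proof.
rewrite /num_linext -(card_in_imset (f := shift0 v)).
  apply: subset_leq_card; apply/subsetP=> g /imsetP[f Hf ->].
  move: Hf; rewrite !inE => /andP[Hf /eqP Hfv].
  case/linextE: (Hf) => _ H2 H3 H4.
  have Hneq x : x != v -> (f x : nat) != #|T|.
    move=> Hx; apply/eqP=> Hx1; move/eqP: Hx; apply.
    by apply: H3 => //; rewrite Hx1 Hfv.
  apply: linextI.
  - by move=> x; rewrite !inE andbT shift0E negbK => ->.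
  - move=> x; rewrite !inE andbT shift0E card_setD1T => Hx; rewrite (negbTE Hx).
    have := H2 x (in_setT x); have := Hneq x Hx; rewrite cardsT; nlia.
  - move=> x y; rewrite !inE !andbT !shift0E => Hx Hy; rewrite (negbTE Hx) (negbTE Hy).
    by move=> Hxy; apply: H3.
  - move=> u w; rewrite !inE !andbT !shift0E => Hu Hw; rewrite (negbTE Hu) (negbTE Hw).
    by move/restr_lt/(H4 u w (in_setT u) (in_setT w)).
move=> f g; rewrite !inE => /andP[Hf /eqP Hfv] /andP[Hg /eqP Hgv] Heq.
apply/ffunP=> x; apply/val_inj => /=.
have := congr1 (fun h : {ffun T -> 'I_#|T|.+1} => (h x : nat)) Heq.
rewrite /= !shift0E; case: eqP => [->|//]; by rewrite Hfv Hgv.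
Qed.

End Aux.

Lemma count_cover (T : finType) (A : {set T * T}) (k : nat) :
  0 < k <= #|T| ->
  num_linext [set: T] A <=
  \sum_(v : T) #|[set f | is_linext [set: T] A f & (f v : nat) == k]|.
Proof.
move=> Hk; rewrite /num_linext -sum1dep_card.
rewrite [X in _ <= X](eq_bigr (fun v => \sum_(f | is_linext [set: T] A f) (((f v : nat) == k) : nat))); last first.
  move=> v _; rewrite -(sum1dep_card (fun f : {ffun T -> 'I_#|T|.+1} => is_linext [set: T] A f && ((f v : nat) == k))) big_mkcondr.
  by apply: eq_bigr => f _; case: ((f v : nat) == k).
rewrite exchange_big /=; apply: leq_sum => f Hf.
have Hk' : k < #|T|.+1 by lia.
have Hk0 : (inord k : 'I_#|T|.+1) != ord0.
  by apply/eqP=> /(congr1 val); rewrite /= (inordK Hk'); lia.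
case: (linext_surj Hf Hk0) => x Hx.
rewrite (bigD1 x) //= Hx (inordK Hk').
by rewrite eqxx.
Qed.

Lemma neighbor (T : finType) (e : rel T) (v : T) :
  connected_graph e -> 2 <= #|T| -> exists w, e v w.
Proof.
move=> Hc H2.
have : 0 < #|predC1 v| by rewrite cardC1; lia.
case/card_gt0P=> u; rewrite !inE => Huv.
case/connectP: (Hc v u) => [[|w p]] /= Hp Hu.
  by move: Huv; rewrite Hu eqxx.
by case/andP: Hp => Hw _; exists w.
Qed.

Theorem mainTheorem11 (T : finType) (e : rel T) :
  simple_graph e -> connected_graph e -> 2 <= #|T| ->
  2 * eps e [set: T] <= \sum_(v : T) eps e ([set: T] :\ v).
Proof.
move=> [Hsym Hirr] Hconn H2.
rewrite {1}/eps.
case: (posnP #|[pred A | acyclic_orientation e [set: T] A]|) => [H0|Hpos].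
  rewrite [X in _ * X]big_pred0 //; move=> A; exact: (card0_eq H0 A).
case: (eq_bigmax_cond (num_linext [set: T]) Hpos) => A HA ->.
have HA' : acyclic_orientation e [set: T] A by [].
have key v :
  #|[set f | is_linext [set: T] A f & (f v : nat) == 1]| +
  #|[set f | is_linext [set: T] A f & (f v : nat) == #|T|]| <=
  eps e ([set: T] :\ v).
  have Hle : num_linext ([set: T] :\ v) (restr A v) <= eps e ([set: T] :\ v).
    exact: (leq_bigmax_cond _ (restr_ao v HA')).
  case: (neighbor v Hconn H2) => w Hvw.
  have Hwv : w != v by apply/eqP=> Hw; move: Hvw; rewrite Hw Hirr.
  have Hvw' : v != w by rewrite eq_sym.
  case/andP: HA' => /forallP HO _.
  move/forallP: (HO v) => /(_ w) /andP[_ /implyP] /(_ _).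
  rewrite !in_setT Hvw => /(_ isT) Hx.
  case Hin : ((w, v) \in A).
  - have -> : #|[set f | is_linext [set: T] A f & (f v : nat) == 1]| = 0.
      apply/eqP; rewrite cards_eq0; apply/eqP/setP => f; rewrite !inE.
      apply/negbTE/negP => /andP[Hf /eqP Hfv].
      case/linextE: Hf => _ Hb _ H4.
      have : ao_lt A w v by rewrite /ao_lt Hwv connect1.
      move/(H4 w v (in_setT w) (in_setT v)); rewrite Hfv.
      have := Hb w (in_setT w); lia.
    rewrite add0n; exact: leq_trans (Ln A v) Hle.
  - have Hin' : (v, w) \in A by move: Hx; rewrite Hin; case: ((v, w) \in A).
    have -> : #|[set f | is_linext [set: T] A f & (f v : nat) == #|T|]| = 0.
      apply/eqP; rewrite cards_eq0; apply/eqP/setP => f; rewrite !inE.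
      apply/negbTE/negP => /andP[Hf /eqP Hfv].
      case/linextE: Hf => _ Hb _ H4.
      have : ao_lt A v w by rewrite /ao_lt Hvw' connect1.
      move/(H4 v w (in_setT v) (in_setT w)); rewrite Hfv.
      have := Hb w (in_setT w); rewrite cardsT; lia.
    rewrite addn0; exact: leq_trans (L1 A v) Hle.
rewrite mul2n -addnn.
apply: leq_trans (leq_add (count_cover A (k := 1) _) (count_cover A (k := #|T|) _)) _.
- lia.
- lia.
rewrite -big_split /=; apply: leq_sum => v _; exact: key.
Qed.
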